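(* Let $\mathcal{P}=\langle P,\le\rangle$ be a finite bounded poset with $|P|\ge 2$, and let $R^+(\mathcal{P})$ be its interval rank poset. Then the width satisfies $\mathcal{W}(R^+(\mathcal{P}))\le\mathcal{W}(\mathcal{P})$.
   Context: A poset is bounded if it has a least and a greatest element. The height $H$ of a finite poset is the number of elements in its largest chain; the width $\mathcal{W}$ is the size of its largest antichain. For $a\in P$, $\uparrow a=\{b:b\ge a\}$ and $\downarrow a=\{b:b\le a\}$ as subposets. The standard interval rank is $R^+(a)=[H(\uparrow a)-1,\;H(\mathcal{P})-H(\downarrow a)]$. The interval rank poset $R^+(\mathcal{P})$ is the set $\{R^+(a):a\in P\}$ of intervals ordered by $\ge_W$, where $[x_*,x^*]\le_W[y_*,y^*]$ iff $x_*\le y_*$ and $x^*\le y^*$. *)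

(* Defs.v *)
From HB Require Import structures.
From mathcomp Require Import all_boot all_order.
Set Implicit Arguments. Unset Strict Implicit. Unset Printing Implicit Defensive.
Import Order.TTheory.

Section Generic.
Variables (T : finType) (le : rel T).

Definition is_chain (C : {set T}) : bool :=
  [forall x in C, forall y in C, le x y || le y x].

Definition is_antichain (A : {set T}) : bool :=
  [forall x in A, forall y in A, (x != y) ==> ~~ le x y].

Definition height_in (S : {set T}) : nat :=
  \max_(C : {set T} | (C \subset S) && is_chain C) #|C|.

Definition width : nat := \max_(A : {set T} | is_antichain A) #|A|.
End Generic.

Section PosetDefs.
Context {d : Order.disp_t} {T : finPOrderType d}.

Definition leT : rel T := fun x y => (x <= y)%O.

Definition height_of (S : {set T}) : nat := height_in leT S.
Definition up (a : T) : {set T} := [set b | (a <= b)%O].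
Definition down (a : T) : {set T} := [set b | (b <= a)%O].

Definition Rplus (a : T) : nat * nat :=
  (height_of (up a) - 1, height_of [set: T] - height_of (down a)).

Definition Rplus_carrier : seq (nat * nat) := undup [seq Rplus a | a <- enum T].
Definition RplusT : finType := seq_sub Rplus_carrier.

Definition leW (x y : nat * nat) : bool := (x.1 <= y.1) && (x.2 <= y.2).
Definition leR : rel RplusT := fun x y => leW (val x) (val y).

Definition width_Rplus : nat := width leR.
Definition width_P : nat := width leT.

Definition bounded : Prop :=
  (exists b : T, forall x : T, (b <= x)%O) /\ (exists t : T, forall x : T, (x <= t)%O).
End PosetDefs.

(* Main.v *)
Require Import Defs.
From mathcomp Require Import all_boot all_order.
Import Order.TTheory.
Local Open Scope order_scope.

Lemma height_mono (U : finType) (le : rel U) (S S' : {set U}) :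
  S \subset S' -> (height_in le S <= height_in le S')%N.
Proof.
move=> sub; apply/bigmax_leqP => C /andP[CS Cc].
apply: (leq_bigmax_cond (F := fun C : {set U} => #|C|)).
by rewrite Cc andbT (subset_trans CS sub).
Qed.

Lemma Rplus_anti (d : Order.disp_t) (T : finPOrderType d) (a b : T) :
  a <= b -> leW (Rplus b) (Rplus a).
Proof.
move=> ab; rewrite /leW /Rplus /=; apply/andP; split.
  apply: leq_sub2r; apply: height_mono; apply/subsetP => x.
  by rewrite !inE => bx; apply: le_trans bx.
apply: leq_sub2l; apply: height_mono; apply/subsetP => x.
by rewrite !inE => xa; apply: le_trans ab.
Qed.

Local Close Scope order_scope.
Theorem proposition6 (d : Order.disp_t) (T : finPOrderType d) :
  bounded (T := T) -> 2 <= #|T| ->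
  width_Rplus (T := T) <= width_P (T := T).
Proof.
move=> _ _.
have ex : forall x : RplusT (T := T), exists a : T, Rplus a = val x.
  move=> x; have := valP x; rewrite /Rplus_carrier mem_undup.
  by case/mapP => a _ ->; exists a.
have [f fP] := fin_all_exists ex.
rewrite /width_Rplus /width_P /width; apply/bigmax_leqP => A antiA.
have finj : {in A &, injective f}.
  by move=> x y _ _ e; apply: val_inj; rewrite -!fP e.
rewrite -(card_in_imset finj).
apply: (leq_bigmax_cond (F := fun C : {set T} => #|C|)).
apply/forallP => u; apply/implyP => /imsetP[x xA ->].
apply/forallP => v; apply/implyP => /imsetP[y yA ->].
apply/implyP => neq; apply/negP => le_xy.
have nxy : y != x by apply: contraNneq neq => ->.
move: antiA => /forallP/(_ y)/implyP/(_ yA)/forallP/(_ x)/implyP/(_ xA)/implyP/(_ nxy).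
by rewrite /leR -!fP (@Rplus_anti _ _ _ _ le_xy).
Qed.
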